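(* Let $p$ be a prime, $f\in\mathbb{Z}_p[x]$, $n\ge1$, let $\sigma=(x_1,\dots,x_k)$ be a $k$-cycle of $f_n$ (with representatives $x_i\in\mathbb{Z}_p$), and let $\tilde\sigma$ be a lift of $\sigma$ of length $kr$, $r\ge1$. Put $a_n(x)=(f^k)'(x)$, $b_n(x)=(f^k(x)-x)/p^n$, $a_{n+1}(x)=(f^{kr})'(x)$, $b_{n+1}(x)=(f^{kr}(x)-x)/p^{n+1}$. Then for all $1\le i\le k$ and $0\le t\le p-1$, $$a_{n+1}(x_i+p^nt)\equiv a_n(x_i)^r\pmod{p^n},$$ $$p\,b_{n+1}(x_i+p^nt)\equiv t\big(a_n(x_i)^r-1\big)+b_n(x_i)\big(1+a_n(x_i)+\dots+a_n(x_i)^{r-1}\big)\pmod{p^n}.$$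
   Context: $f_n$ is the induced map on $\mathbb{Z}/p^n\mathbb{Z}$, $f_n(x\bmod p^n)=f(x)\bmod p^n$. A $k$-cycle of $f_n$ is a tuple of distinct elements $x_1,\dots,x_k$ with $f_n(x_i)=x_{i+1}$, $f_n(x_k)=x_1$. The lifts of $\sigma$ are the cycles of $f_{n+1}$ contained in $\{y\in\mathbb{Z}/p^{n+1}\mathbb{Z}:y\bmod p^n\in\sigma\}$; their lengths are multiples of $k$. *)

(* Defs.v *)
From HB Require Import structures.
From mathcomp Require Import all_boot all_order all_algebra.
From mathcomp Require Import boolp zify.
Set Implicit Arguments. Unset Strict Implicit. Unset Printing Implicit Defensive.
Import GRing.Theory.
Local Open Scope ring_scope.

(* The ring Z_p of p-adic integers, as the inverse limit of Z/m^k Z,        *)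
(* m := maxn p 2 (so m = p whenever p is prime; the maxn only guards the     *)
(* degenerate p = 0, 1).  An element is a compatible sequence of residues.   *)
Section Padic.
Variable p : nat.

Definition pbase := maxn p 2.

Lemma pbase_gt1 : (1 < pbase)%N.
Proof. by rewrite /pbase leq_max leqnn orbT. Qed.

Lemma pbaseX_gt0 k : (0 < pbase ^ k)%N.
Proof. by rewrite expn_gt0 (ltn_trans _ pbase_gt1). Qed.

Definition padic_pred (s : nat -> nat) :=
  forall k, (s k < pbase ^ k)%N /\ (s k.+1 %% pbase ^ k = s k)%N.

Definition padic_int := {s : nat -> nat | padic_pred s}.

HB.instance Definition _ := gen_eqMixin padic_int.
HB.instance Definition _ := gen_choiceMixin padic_int.

Lemma Zp_eq (x y : padic_int) : (forall k, proj1_sig x k = proj1_sig y k) -> x = y.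
Proof.
case: x => [s hs]; case: y => [t ht] /= e.
have est : s = t by apply: funext.
subst t; congr exist; exact: Prop_irrelevance.
Qed.

Lemma dvd_pbaseS k : (pbase ^ k %| pbase ^ k.+1)%N.
Proof. by rewrite expnS dvdn_mull. Qed.

Definition mk_op (g : nat -> nat) := fun k => (g k %% pbase ^ k)%N.

Lemma mk_op_pred (g : nat -> nat) :
  (forall k, g k.+1 = g k %[mod pbase ^ k])%N -> padic_pred (mk_op g).
Proof.
move=> h k; split; first by rewrite ltn_mod pbaseX_gt0.
by rewrite /mk_op modn_dvdm ?dvd_pbaseS // h.
Qed.

Lemma Zp_compat (x : padic_int) k : (proj1_sig x k.+1 = proj1_sig x k %[mod pbase ^ k])%N.
Proof.
case: x => s hs /=; have [lt e] := hs k.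
by rewrite e modn_small.
Qed.

Lemma Zp_small (x : padic_int) k : (proj1_sig x k %% pbase ^ k = proj1_sig x k)%N.
Proof. by case: x => s hs /=; rewrite modn_small //; case: (hs k). Qed.

Definition Zp0 : padic_int := exist _ (mk_op (fun _ => 0%N)) (@mk_op_pred (fun _ => 0%N) (fun _ => erefl)).
Definition Zp1 : padic_int := exist _ (mk_op (fun _ => 1%N)) (@mk_op_pred (fun _ => 1%N) (fun _ => erefl)).

Definition Zp_add (x y : padic_int) : padic_int.
Proof.
exists (mk_op (fun k => proj1_sig x k + proj1_sig y k)%N); apply: mk_op_pred => k.
by rewrite -modnDm Zp_compat (Zp_compat y) modnDm.
Defined.

Definition Zp_mul (x y : padic_int) : padic_int.
Proof.
exists (mk_op (fun k => proj1_sig x k * proj1_sig y k)%N); apply: mk_op_pred => k.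
by rewrite -modnMm Zp_compat (Zp_compat y) modnMm.
Defined.

Definition Zp_opp (x : padic_int) : padic_int.
Proof.
exists (mk_op (fun k => pbase ^ k - proj1_sig x k)%N); apply: mk_op_pred => k.
set P := (pbase ^ k)%N; set s' := proj1_sig x k.+1.
have lt1 : (s' < P * pbase)%N by rewrite /s' /P -expnSr; case: (proj2_sig x k.+1).
have e : (s' = s' %/ P * P + proj1_sig x k)%N.
  by rewrite {1}(divn_eq s' P) /s' Zp_compat Zp_small.
have lt0 : (proj1_sig x k < P)%N by case: (proj2_sig x k).
have hq : (s' %/ P < pbase)%N by rewrite ltn_divLR ?pbaseX_gt0 // mulnC.
rewrite expnSr -/P.
have -> : (P * pbase - s' = P * (pbase - (s' %/ P).+1) + (P - proj1_sig x k))%N.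
  rewrite {1}e; move: hq lt0; set q := (s' %/ P)%N; set a := proj1_sig x k.
  move=> hq lt0; nia.
by rewrite mulnC modnMDl.
Defined.

Lemma Zp_addA : associative Zp_add.
Proof. by move=> x y z; apply: Zp_eq => k /=; rewrite /mk_op modnDml modnDmr addnA. Qed.
Lemma Zp_addC : commutative Zp_add.
Proof. by move=> x y; apply: Zp_eq => k /=; rewrite /mk_op addnC. Qed.
Lemma Zp_add0 : left_id Zp0 Zp_add.
Proof. by move=> x; apply: Zp_eq => k /=; rewrite /mk_op mod0n add0n Zp_small. Qed.
Lemma Zp_addN : left_inverse Zp0 Zp_opp Zp_add.
Proof.
move=> x; apply: Zp_eq => k /=; rewrite /mk_op modnDml subnK ?modnn ?mod0n //.
by apply: ltnW; case: (proj2_sig x k).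
Qed.

HB.instance Definition _ := GRing.isZmodule.Build padic_int Zp_addA Zp_addC Zp_add0 Zp_addN.

Lemma Zp_mulA : associative Zp_mul.
Proof. by move=> x y z; apply: Zp_eq => k /=; rewrite /mk_op modnMml modnMmr mulnA. Qed.
Lemma Zp_mulC : commutative Zp_mul.
Proof. by move=> x y; apply: Zp_eq => k /=; rewrite /mk_op mulnC. Qed.
Lemma Zp_mul1 : left_id Zp1 Zp_mul.
Proof. by move=> x; apply: Zp_eq => k /=; rewrite /mk_op modnMml mul1n Zp_small. Qed.
Lemma Zp_mulDl : left_distributive Zp_mul Zp_add.
Proof.
move=> x y z; apply: Zp_eq => k /=.
by rewrite /mk_op modnMml modnDm mulnDl.
Qed.
Lemma Zp_one_neq0 : Zp1 != Zp0 :> padic_int.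
Proof.
apply/eqP => /(f_equal (fun x : padic_int => proj1_sig x 1%N)) /=.
by rewrite /mk_op expn1 mod0n modn_small ?pbase_gt1.
Qed.

HB.instance Definition _ := GRing.Zmodule_isComNzRing.Build padic_int
  Zp_mulA Zp_mulC Zp_mul1 Zp_mulDl Zp_one_neq0.

End Padic.

Definition congp (p n : nat) (a b : padic_int p) : Prop :=
  exists c : padic_int p, a - b = (p%:R) ^+ n * c.

Arguments congp : clear implicits.

(* exact division by p^n in Z_p: the z with y = p^n * z (0 if none exists) *)
Definition pdivn (p n : nat) (y : padic_int p) : padic_int p :=
  match pselect (exists z : padic_int p, y = (p%:R) ^+ n * z) with
  | left h => projT1 (cid h)
  | right _ => 0
  end.

Arguments pdivn : clear implicits.

Definition poly_iter (R : comNzRingType) (f : {poly R}) (k : nat) : {poly R} :=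
  iter k (fun g => f \Po g) 'X.

(* x 0, ..., x (k-1) (elements of Z_p) represent a k-cycle of the induced map
   f_n on Z/p^nZ: their classes mod p^n are pairwise distinct and
   f_n (x i mod p^n) = x (i+1 mod k) mod p^n. *)
Definition is_cycle_rep (p : nat) (f : {poly padic_int p}) (n k : nat)
    (x : nat -> padic_int p) : Prop :=
  (0 < k)%N /\
  (forall i j, (i < k)%N -> (j < k)%N -> congp p n (x i) (x j) -> i = j) /\
  (forall i, (i < k)%N -> congp p n f.[x i] (x ((i.+1 %% k)%N))).

(* y 0, ..., y (m-1) represent a lift (of length m) of the cycle represented
   by x 0, ..., x (k-1): a cycle of f_(n+1) all of whose elements reduce mod
   p^n to elements of the cycle of f_n. *)
Definition is_lift_rep (p : nat) (f : {poly padic_int p}) (n k : nat)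
    (x : nat -> padic_int p) (m : nat) (y : nat -> padic_int p) : Prop :=
  is_cycle_rep f n.+1 m y /\
  (forall j, (j < m)%N -> exists2 i, (i < k)%N & congp p n (y j) (x i)).

(* Main.v *)
Require Import Defs.
From HB Require Import structures.
From mathcomp Require Import all_boot all_order all_algebra.
From mathcomp Require Import boolp ring.
Import GRing.Theory.
Local Open Scope ring_scope.

Section Gen.
Variable R : comNzRingType.
Variable P : R.
Definition cg (a b : R) := exists c, a - b = P * c.

Lemma cg_intro a b c : a = b + P * c -> cg a b.
Proof. by move=> ->; exists c; ring. Qed.

Lemma cg_elim a b : cg a b -> exists c, a = b + P * c.
Proof. by case=> c h; exists c; rewrite -h; ring. Qed.

Lemma cg_refl a : cg a a.
Proof. by apply: (@cg_intro _ _ 0); ring. Qed.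

Lemma cg_eq a b : a = b -> cg a b.
Proof. by move=> ->; apply: cg_refl. Qed.

Lemma cg_trans a b c : cg a b -> cg b c -> cg a c.
Proof.
move=> /cg_elim [u ->] /cg_elim [v ->]; apply: (@cg_intro _ _ (u + v)); ring.
Qed.

Lemma cgD a b c d : cg a b -> cg c d -> cg (a + c) (b + d).
Proof.
move=> /cg_elim [u ->] /cg_elim [v ->]; apply: (@cg_intro _ _ (u + v)); ring.
Qed.

Lemma cgM a b c d : cg a b -> cg c d -> cg (a * c) (b * d).
Proof.
move=> /cg_elim [u ->] /cg_elim [v ->].
apply: (@cg_intro _ _ (u * d + b * v + P * u * v)); ring.
Qed.

Lemma taylor (q : {poly R}) x h :
  exists e, q.[x + h] = q.[x] + h * q^`().[x] + h ^+ 2 * e.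
Proof.
elim/poly_ind: q => [|q c [e IH]].
  by exists 0; rewrite deriv0 !horner0; ring.
exists (q^`().[x] + e * x + h * e).
rewrite derivMXaddC !hornerMXaddC hornerD hornerMX IH; ring.
Qed.

Lemma cg_horner (q : {poly R}) a b : cg a b -> cg q.[a] q.[b].
Proof.
move=> /cg_elim [c ->]; have [e ->] := taylor q b (P * c).
apply: (@cg_intro _ _ (c * q^`().[b] + P * c ^+ 2 * e)); ring.
Qed.
End Gen.
Arguments cg {R}.
Arguments cg_refl {R P}.
Arguments cg_eq {R P a b}.
Arguments cg_intro {R P a b}.
Arguments cg_elim {R P a b}.
Arguments cg_trans {R P a b c}.
Arguments cgD {R P a b c d}.
Arguments cgM {R P a b c d}.
Arguments cg_horner {R P} q {a b}.

Lemma poly_iter_add (R : comNzRingType) (f : {poly R}) a b :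
  poly_iter f (a + b) = poly_iter f a \Po poly_iter f b.
Proof.
elim: a => [|a IH]; first by rewrite add0n /= comp_polyX.
by rewrite addSn /= IH comp_polyA.
Qed.

Section Zp.
Variable p : nat.
Hypothesis hp : prime p.

Lemma pbaseE : pbase p = p.
Proof. by rewrite /pbase; apply/maxn_idPl; apply: prime_gt1. Qed.

Lemma natr_comp (m k : nat) : proj1_sig (m%:R : padic_int p) k = (m %% pbase p ^ k)%N.
Proof.
elim: m => [|m IH] //.
rewrite mulrS /= /mk_op IH /= /mk_op modnDm.
by rewrite add1n.
Qed.

Lemma p_cancel (c : padic_int p) : (p%:R : padic_int p) * c = 0 -> c = 0.
Proof.
move=> h; apply: Zp_eq => k /=.
have hk : forall k, (p * proj1_sig c k %% pbase p ^ k = 0)%N.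
  move=> j; move: (f_equal (fun y : padic_int p => proj1_sig y j) h) => /=.
  by rewrite /mk_op natr_comp modnMml mod0n.
rewrite /mk_op mod0n.
have := hk k.+1; rewrite pbaseE expnS => /eqP; rewrite -/(dvdn _ _).
rewrite dvdn_pmul2l ?prime_gt0 // => hd.
rewrite -(Zp_small c k) -Zp_compat pbaseE; exact/eqP.
Qed.

Lemma pn_cancel n (u v : padic_int p) :
  (p%:R : padic_int p) ^+ n * u = (p%:R) ^+ n * v -> u = v.
Proof.
move=> h; apply/eqP; rewrite -subr_eq0; apply/eqP.
have {h} : (p%:R : padic_int p) ^+ n * (u - v) = 0 by rewrite mulrBr h subrr.
elim: n (u - v) => [|n IH] w h.
  by move: h; rewrite expr0 mul1r.
by apply: IH; apply: p_cancel; rewrite mulrA -exprS.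
Qed.

Lemma pdivnP n (y : padic_int p) :
  (exists z, y = (p%:R) ^+ n * z) -> y = (p%:R) ^+ n * pdivn p n y.
Proof.
move=> h; rewrite /pdivn; case: pselect => [h'|//].
by case: (cid h').
Qed.
End Zp.

Theorem lemma2p3 (p : nat) (hp : prime p) (f : {poly padic_int p}) (n k r : nat)
    (x y : nat -> padic_int p) :
  (1 <= n)%N -> (1 <= r)%N ->
  is_cycle_rep f n k x ->
  is_lift_rep f n k x (k * r) y ->
  let a_n := fun z : padic_int p => ((poly_iter f k)^`()).[z] in
  let b_n := fun z : padic_int p => pdivn p n ((poly_iter f k).[z] - z) in
  let a_n1 := fun z : padic_int p => ((poly_iter f (k * r))^`()).[z] in
  (* p * b_(n+1)(z) = (f^(kr)(z) - z) / p^n *)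
  let p_b_n1 := fun z : padic_int p => pdivn p n ((poly_iter f (k * r)).[z] - z) in
  forall i t : nat, (i < k)%N -> (t <= p - 1)%N ->
    let z := x i + (p%:R) ^+ n * t%:R in
    congp p n (a_n1 z) (a_n (x i) ^+ r) /\
    congp p n (p_b_n1 z)
      (t%:R * (a_n (x i) ^+ r - 1)
       + b_n (x i) * \sum_(j < r) a_n (x i) ^+ j).
Proof.
move=> _ _ [hk [_ hcyc]] _ a_n b_n a_n1 p_b_n1 i t hi _ z.
set P := (p%:R : padic_int p) ^+ n.
change (cg P (a_n1 z) (a_n (x i) ^+ r) /\
  cg P (p_b_n1 z) (t%:R * (a_n (x i) ^+ r - 1)
       + b_n (x i) * \sum_(j < r) a_n (x i) ^+ j)).
have orb : forall j, cg P (poly_iter f j).[x i] (x ((i + j) %% k)%N).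
  elim=> [|j IH] /=; first by rewrite addn0 modn_small // hornerX; apply: cg_refl.
  rewrite horner_comp; apply: cg_trans (cg_horner f IH) _.
  apply: cg_trans (hcyc _ _) _; first by rewrite ltn_mod.
  by rewrite -[((i + j) %% k).+1]addn1 modnDml addn1 addnS; apply: cg_refl.
set g := poly_iter f k.
have gx : cg P g.[x i] (x i) by move: (orb k); rewrite modnDr modn_small.
set a := a_n (x i); set b := b_n (x i).
have hb : g.[x i] = x i + P * b.
  have := @pdivnP p n (g.[x i] - x i) gx.
  rewrite -/P => h; rewrite /b /b_n -/g -h; ring.
have main : forall j, exists s, (poly_iter f (k * j)).[z] = x i + P * s /\
   cg P s (a ^+ j * t%:R + b * \sum_(l < j) a ^+ l) /\
   cg P (poly_iter f (k * j))^`().[z] (a ^+ j).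
  elim=> [|j [s [hs [hs1 hs2]]]].
    exists t%:R; rewrite muln0 /= hornerX derivX hornerC big_ord0 expr0.
    split; first by []. split; apply: cg_eq; ring.
  rewrite mulnS poly_iter_add -/g horner_comp deriv_comp hornerM horner_comp hs.
  have [e he] := taylor _ g (x i) (P * s).
  exists (b + s * a + P * s ^+ 2 * e); split.
    rewrite he hb /a /a_n -/g; ring.
  split.
    apply: cg_trans (_ : cg P _ (b + (a ^+ j * t%:R + b * \sum_(l < j) a ^+ l) * a)) _.
      apply: cg_trans (_ : cg P _ (b + s * a)) _.
        by apply: (cg_intro (s ^+ 2 * e)); ring.
      exact: cgD (cg_refl _) (cgM hs1 (cg_refl _)).
    apply: cg_eq; rewrite big_ord_recl.
    rewrite [in RHS](eq_bigr (fun l : 'I_j => a ^+ l * a)); last by move=> l _; rewrite lift0 exprSr.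
    rewrite -mulr_suml exprSr; ring.
  rewrite exprS; apply: cgM hs2.
  by apply: cg_horner; apply: (cg_intro s).
have [s [hs [hs1 hs2]]] := main r.
split; first exact: hs2.
have hw : p_b_n1 z = s - t%:R.
  have h := @pdivnP p n ((poly_iter f (k * r)).[z] - z).
  rewrite -/P in h; apply: (@pn_cancel p hp n); rewrite -/P.
  rewrite /p_b_n1 -h; first by rewrite hs /z -/P; ring.
  by exists (s - t%:R); rewrite hs /z -/P; ring.
rewrite hw; apply: cg_trans (_ : cg P _ (a ^+ r * t%:R + b * \sum_(l < r) a ^+ l - t%:R)) _.
  exact: cgD hs1 (cg_refl _).
by apply: cg_eq; ring.
Qed.
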